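(* Let $S$ be a Polish space, $R\subseteq S\times S$ a Borel relation, and $\mu,\nu$ Borel probability measures on $S$. Set $c=1-\mathbf 1_R$. Then the supremum \[ \sup\Big\{\int_S\phi\,d\mu-\int_S\phi\,d\nu:\ \phi\in b\mathcal B(S),\ \phi(x)-\phi(y)\le c(x,y)\ \forall x,y\in S\Big\} \] is attained by some $\phi\in b\mathcal B(S)$ satisfying $\phi(x)-\phi(y)\le c(x,y)$ for all $x,y\in S$.
   Context: $b\mathcal{B}(S)$ denotes the set of all bounded Borel measurable functions $S\to\mathbb{R}$; $\mathbf 1_R$ is the indicator function of $R$. *)

(* Defs.v *)
From HB Require Import structures.
From mathcomp Require Import all_boot all_order all_algebra.
From mathcomp Require Import all_classical all_reals all_analysis.
Set Implicit Arguments. Unset Strict Implicit. Unset Printing Implicit Defensive.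
Import Order.TTheory GRing.Theory Num.Theory.
Local Open Scope classical_set_scope.
Local Open Scope ring_scope.

(* A Polish space, presented with a fixed complete (pseudo)metric structure:
   complete, Hausdorff (so the pseudometric is a metric) and separable
   (has a countable dense subset). *)
Definition polish_space (R : realType) (T : completePseudoMetricType R) : Prop :=
  hausdorff_space T /\ exists D : set T, countable D /\ dense D.

Definition borel_of (T : pointedType) (tT : set (set T)) :=
  g_sigma_algebraType tT.

Definition borel_set (T : topologicalType) (A : set T) : Prop :=
  <<s @open T >> A.

Definition cost (R : realType) (T : Type) (Rel : set (T * T)) (x y : T) : R :=
  1 - \1_Rel (x, y).

Definition bounded_borel (R : realType) (d : measure_display)
  (S : measurableType d) (phi : S -> R) : Prop :=
  measurable_fun setT phi /\ exists M : R, forall x, `|phi x| <= M.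

Definition dual_obj (R : realType) (d : measure_display) (S : measurableType d)
  (mu nu : probability S R) (phi : S -> R) : \bar R :=
  (\int[mu]_x (phi x)%:E - \int[nu]_x (phi x)%:E)%E.
Arguments cost {R T} Rel x y.

(* Main.v *)
Require Import Defs.
From HB Require Import structures.
From mathcomp Require Import all_boot all_order all_algebra.
From mathcomp Require Import all_classical all_reals all_analysis.
From mathcomp Require Import measurable_realfun.
From mathcomp Require Import ring lra.
Import Order.TTheory GRing.Theory Num.Theory numFieldNormedType.Exports.
Set Implicit Arguments. Unset Strict Implicit. Unset Printing Implicit Defensive.
Local Open Scope classical_set_scope.
Local Open Scope ring_scope.

Section Gen.
Context (d : measure_display) (S : measurableType d) (R : realType) (P : probability S R).

Definition II (f : S -> R) : R := fine (\int[P]_x (f x)%:E).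

Lemma bb_int (f : S -> R) : bounded_borel f -> P.-integrable setT (EFin \o f).
Proof.
move=> [mf [M hM]]; apply: measurable_bounded_integrable => //.
  by rewrite (le_lt_trans (probability_le1 P measurableT)) // ltry.
exists M; split; first exact: num_real.
by move=> y My x _; rewrite /= (le_trans (hM x)) // ltW.
Qed.

Arguments bb_int [f].

Lemma bb_fin (f : S -> R) : bounded_borel f -> (\int[P]_x (f x)%:E = (II f)%:E)%E.
Proof. by move=> bf; rewrite /II fineK //; apply: integrable_fin_num => //; exact: bb_int. Qed.

Lemma II_cst (c : R) : II (fun=> c) = c.
Proof.
have P1 := @probability_setT _ _ _ P.
rewrite /II integral_cst //.
have -> : (c%:E * P setT = c%:E * 1)%E by congr (_ * _)%E; exact: P1.
by rewrite mule1.
Qed.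

Lemma II_add (f g : S -> R) : bounded_borel f -> bounded_borel g ->
  II (fun x => f x + g x) = II f + II g.
Proof. move=> bf bg; have H := (RintegralD (mu:=P) (D:=setT) (f1:=f) (f2:=g) measurableT (bb_int bf) (bb_int bg)); exact H. Qed.

Lemma II_sub (f g : S -> R) : bounded_borel f -> bounded_borel g ->
  II (fun x => f x - g x) = II f - II g.
Proof. move=> bf bg; have H := (RintegralB (mu:=P) (D:=setT) (f1:=f) (f2:=g) measurableT (bb_int bf) (bb_int bg)); exact H. Qed.

Lemma II_le1 (f : S -> R) : bounded_borel f -> (forall x, `|f x| <= 1) -> `|II f| <= 1.
Proof.
move=> bf h1.
have bc : forall c : R, bounded_borel (fun _ : S => c).
  by move=> c; split; [exact: measurable_cst| exists `|c|].
rewrite ler_norml; apply/andP; split.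
- rewrite -(II_cst (-1)); apply: (le_Rintegral measurableT (bb_int (bc _)) (bb_int bf)).
  by move=> x _; move: (h1 x); rewrite ler_norml => /andP[].
- rewrite -(II_cst 1); apply: (le_Rintegral measurableT (bb_int bf) (bb_int (bc _))).
  by move=> x _; move: (h1 x); rewrite ler_norml => /andP[].
Qed.

Lemma II_cvg (f_ : (S -> R)^nat) (f : S -> R) :
  (forall n, measurable_fun setT (f_ n)) -> (forall n x, `|f_ n x| <= 1) ->
  (forall x, (fun n => f_ n x) @ \oo --> f x) ->
  (fun n => II (f_ n)) @ \oo --> II f.
Proof.
move=> mf h1 cf.
have mf' : measurable_fun setT f by apply: (measurable_fun_cvg mf) => x _; exact: cf.
have ig : P.-integrable setT (EFin \o (fun=> (1:R))).
  by apply: bb_int; split; [exact: measurable_cst| exists 1; rewrite normr1].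
have cf' : forall x, (fun n => (f_ n x)%:E) @ \oo --> (f x)%:E.
  by move=> x; apply: cvg_EFin; [by near=> n|exact: cf].
have [_ _ H] := @dominated_convergence _ _ _ P setT measurableT
  (fun n => EFin \o f_ n) (EFin \o f) (EFin \o (fun=> (1:R)))
  (fun n => (measurable_EFinP _ _).2 (mf n)) ((measurable_EFinP _ _).2 mf')
  (aeW _ (fun x _ => cf' x))
  ig (aeW _ (fun x n _ => h1 n x)).
have bf : bounded_borel f.
  split => //; exists 1 => x.
  rewrite ler_norml; apply/andP; split.
  - apply: (ler_cvg_to (a := \oo) (f := fun=> -1) (g := fun n => f_ n x) (cvg_cst _) (cf x)).
    by near=> n; move: (h1 n x); rewrite ler_norml => /andP[].
  - apply: (ler_cvg_to (a := \oo) (g := fun=> 1) (f := fun n => f_ n x) (cf x) (cvg_cst _)).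
    by near=> n; move: (h1 n x); rewrite ler_norml => /andP[].
rewrite /II; apply: fine_cvg.
by rewrite -bb_fin.
Unshelve. all: by end_near.
Qed.

End Gen.

Section Main.
Context (d : measure_display) (S : measurableType d) (R : realType)
  (mu nu : probability S R) (c : S -> S -> R) (hc : forall x y, c x y <= 1) (hc0 : forall x y, 0 <= c x y).

Definition feas (f : S -> R) := bounded_borel f /\ forall x y, f x - f y <= c x y.
Definition nf (f : S -> R) := feas f /\ forall x, `|f x| <= 1.
Definition Fr (f : S -> R) := II mu f - II nu f.

Lemma nf_bb f : nf f -> bounded_borel f. Proof. by case=> -[]. Qed.

Lemma Fr_le2 f : nf f -> Fr f <= 2.
Proof.
move=> nff; have h1 := II_le1 mu (nf_bb nff) nff.2.
have h2 := II_le1 nu (nf_bb nff) nff.2.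
move: h1 h2; rewrite /Fr !ler_norml => /andP[? ?] /andP[? ?]; lra.
Qed.

Definition E := [set Fr f | f in nf].

Lemma nf0 : nf (fun=> 0).
Proof.
split; last by move=> x; rewrite normr0.
split; first by split; [exact: measurable_cst| exists 0 => x; rewrite normr0].
by move=> x y; rewrite subr0.
Qed.

Lemma hasE : has_sup E.
Proof.
split; first by exists (Fr (fun=> 0)), (fun=> 0) => //; exact: nf0.
by exists 2 => _ [f nff <-]; exact: Fr_le2.
Qed.

Definition s := sup E.

Lemma Fr_le_s f : nf f -> Fr f <= s.
Proof. by move=> nff; apply: sup_upper_bound hasE _ _; exists f. Qed.

Lemma min_diff (a b a' b' e : R) : a - a' <= e -> b - b' <= e ->
  Order.min a b - Order.min a' b' <= e.
Proof.
move=> h1 h2; have [h|h] := leP a b; have [h'|h'] := leP a' b';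
  rewrite ?(min_l h) ?(min_r (ltW h)) ?(min_l h') ?(min_r (ltW h')); lra.
Qed.

Lemma max_diff (a b a' b' e : R) : a - a' <= e -> b - b' <= e ->
  Order.max a b - Order.max a' b' <= e.
Proof.
move=> h1 h2; have [h|h] := leP a b; have [h'|h'] := leP a' b';
  rewrite ?(max_r h) ?(max_l (ltW h)) ?(max_r h') ?(max_l (ltW h')); lra.
Qed.

Lemma min_abs (a b : R) : `|a| <= 1 -> `|b| <= 1 -> `|Order.min a b| <= 1.
Proof. by move=> ha hb; have [h|h] := leP a b; rewrite ?(min_l h) ?(min_r (ltW h)). Qed.

Lemma max_abs (a b : R) : `|a| <= 1 -> `|b| <= 1 -> `|Order.max a b| <= 1.
Proof. by move=> ha hb; have [h|h] := leP a b; rewrite ?(max_r h) ?(max_l (ltW h)). Qed.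

Lemma nf_min f g : nf f -> nf g -> nf (f \min g).
Proof.
move=> [[[mf _] cf] bf] [[[mg _] cg] bg]; split; first split.
- split; first exact: measurable_minr.
  by exists 1 => x /=; apply: min_abs.
- by move=> x y /=; apply: min_diff.
- by move=> x /=; apply: min_abs.
Qed.

Lemma nf_max f g : nf f -> nf g -> nf (f \max g).
Proof.
move=> [[[mf _] cf] bf] [[[mg _] cg] bg]; split; first split.
- split; first exact: measurable_maxr.
  by exists 1 => x /=; apply: max_abs.
- by move=> x y /=; apply: max_diff.
- by move=> x /=; apply: max_abs.
Qed.

Lemma II_minmax (P : probability S R) f g : nf f -> nf g ->
  II P (f \min g) + II P (f \max g) = II P f + II P g.
Proof.
move=> nff nfg.
rewrite -(II_add P (nf_bb (nf_min nff nfg)) (nf_bb (nf_max nff nfg))).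
rewrite -(II_add P (nf_bb nff) (nf_bb nfg)).
by congr II; apply: funext => x /=; rewrite addr_min_max.
Qed.

Lemma Fr_min_ge f g : nf f -> nf g -> Fr f + Fr g - s <= Fr (f \min g).
Proof.
move=> nff nfg; have := Fr_le_s (nf_max nff nfg).
have := II_minmax mu nff nfg; have := II_minmax nu nff nfg.
rewrite /Fr; lra.
Qed.

Lemma lim_le (u : R^nat) l e : u @ \oo --> l -> (forall n, u n <= e) -> l <= e.
Proof.
move=> ul ue; apply: (ler_cvg_to (a := \oo) (f := u) (g := fun=> e) ul (cvg_cst _)).
by near=> n; exact: ue.
Unshelve. all: by end_near.
Qed.

Lemma nf_lim (f_ : (S -> R)^nat) f : (forall n, nf (f_ n)) ->
  (forall x, (fun n => f_ n x) @ \oo --> f x) -> nf f.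
Proof.
move=> nff cf.
have mf : measurable_fun setT f.
  by apply: (measurable_fun_cvg (h := f_)) => [n|x _]; [exact: (nf_bb (nff n)).1|exact: cf].
have b1 : forall x, `|f x| <= 1.
  move=> x; rewrite ler_norml; apply/andP; split.
  - rewrite -lerN2 opprK; apply: (lim_le (u := fun n => - f_ n x)); first exact: cvgN.
    by move=> n; rewrite lerNl; move: (nff n).2 => /(_ x); rewrite ler_norml => /andP[].
  - apply: (lim_le (u := fun n => f_ n x)); first exact: cf.
    by move=> n; move: (nff n).2 => /(_ x); rewrite ler_norml => /andP[].
split => //; split; first by split => //; exists 1.
move=> x y; apply: (lim_le (u := fun n => f_ n x - f_ n y)); first exact: cvgB.
by move=> n; exact: (nff n).1.2.
Qed.

Lemma Fr_lim (f_ : (S -> R)^nat) f : (forall n, nf (f_ n)) ->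
  (forall x, (fun n => f_ n x) @ \oo --> f x) -> (fun n => Fr (f_ n)) @ \oo --> Fr f.
Proof.
move=> nff cf; rewrite /Fr; apply: cvgB.
- by apply: II_cvg => // [n|n x]; [exact: (nf_bb (nff n)).1|exact: (nff n).2].
- by apply: II_cvg => // [n|n x]; [exact: (nf_bb (nff n)).1|exact: (nff n).2].
Qed.

Lemma min_mono (a b a' b' : R) : a <= a' -> b <= b' ->
  Order.min a b <= Order.min a' b'.
Proof.
move=> h1 h2; have [h|h] := leP a b; have [h'|h'] := leP a' b';
  rewrite ?(min_l h) ?(min_r (ltW h)) ?(min_l h') ?(min_r (ltW h')); lra.
Qed.

Lemma exists_opt : exists H, nf H /\ forall f, nf f -> Fr f <= Fr H.
Proof.
pose e := fun n : nat => (2^-1 : R) ^+ n.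
have e0 n : 0 < e n by rewrite /e exprn_gt0 // invr_gt0.
have eS n : e n = 2 * e n.+1.
  by rewrite /e exprS mulrA divff ?mul1r // pnatr_eq0.
have [phi hphi] : exists phi : nat -> S -> R, forall n, nf (phi n) /\ s - e n < Fr (phi n).
  have : forall n, exists f : S -> R, nf f /\ s - e n < Fr f.
    move=> n; have [_ [f nff <-] H] := sup_adherent (e0 n) hasE.
    by exists f; split => //; rewrite /s.
  by case/boolp.choice => f Hf; exists f.
pose g := fix g (n k : nat) {struct k} : S -> R :=
  match k with 0 => phi n | k'.+1 => g n k' \min phi (n + k'.+1)%N end.
have g0 n : g n 0 = phi n by [].
have gS n k : g n k.+1 = g n k \min phi (n + k.+1)%N by [].
clearbody g.
have gnf n k : nf (g n k).
  elim: k => [|k IH]; first by rewrite g0; exact: (hphi n).1.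
  by rewrite gS; apply: nf_min => //; exact: (hphi _).1.
have gFr n k : s - 2 * e n + e (n + k)%N <= Fr (g n k).
  elim: k => [|k IH].
    by rewrite g0 addn0; have := (hphi n).2; lra.
  rewrite gS; have := Fr_min_ge (gnf n k) (hphi (n + k.+1)%N).1.
  have := (hphi (n + k.+1)%N).2; have := eS (n + k)%N; rewrite addnS; lra.
have gdec n k x : g n k.+1 x <= g n k x.
  by rewrite gS /= ge_min lexx.
have gshift n k x : g n k.+1 x <= g n.+1 k x.
  elim: k => [|k IH].
    by rewrite gS !g0 /= ge_min addn1 lexx orbT.
  rewrite gS [g n.+1 k.+1]gS /=; apply: min_mono => //.
  by rewrite addSnnS.
have glb n k x : -1 <= g n k x.
  by move: (gnf n k).2 => /(_ x); rewrite ler_norml => /andP[].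
have gub n k x : g n k x <= 1.
  by move: (gnf n k).2 => /(_ x); rewrite ler_norml => /andP[].
pose h n x := inf (range (fun k => g n k x)).
have hlb n x : has_lbound (range (fun k => g n k x)).
  by exists (-1) => _ [k _ <-]; exact: glb.
have hcv n x : (fun k => g n k x) @ \oo --> h n x.
  apply: nonincreasing_cvgn; last exact: hlb.
  by apply/nonincreasing_seqP => k; exact: gdec.
have hnf n : nf (h n) := nf_lim (gnf n) (hcv n).
have hFr n : s - 2 * e n <= Fr (h n).
  apply: (ler_cvg_to (a := \oo) (f := fun=> s - 2 * e n) (g := fun k => Fr (g n k))
    (cvg_cst _) (Fr_lim (gnf n) (hcv n))).
  by near=> k; have := gFr n k; have := e0 (n + k)%N; lra.
have hinc n x : h n x <= h n.+1 x.
  apply: lb_le_inf; first by exists (g n.+1 0 x), 0%N.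
  move=> _ [k _ <-]; apply: le_trans (gshift n k x).
  by apply: ge_inf; [exact: hlb| exists k.+1].
pose H x := sup (range (fun n => h n x)).
have Hcv x : (fun n => h n x) @ \oo --> H x.
  apply: nondecreasing_cvgn; first by apply/nondecreasing_seqP => n; exact: hinc.
  exists 1 => _ [n _ <-].
  by move: (hnf n).2 => /(_ x); rewrite ler_norml => /andP[].
have Hnf : nf H := nf_lim hnf Hcv.
have e2 : (fun n => s - 2 * e n) @ \oo --> s.
  rewrite -[X in _ --> X]subr0; apply: cvgB; first exact: cvg_cst.
  apply: (@cvg_geometric _ 2 (2^-1)).
  by rewrite ger0_norm ?invr_ge0 // invf_lt1 // ltr1n.
have HFr : s <= Fr H.
  apply: (ler_cvg_to (a := \oo) (f := fun n => s - 2 * e n) (g := fun n => Fr (h n))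
    e2 (Fr_lim hnf Hcv)).
  by near=> n; exact: hFr.
exists H; split => // f nff.
exact: le_trans (Fr_le_s nff) HFr.
Unshelve. all: by end_near.
Qed.

End Main.

Unset Implicit Arguments.
Set Strict Implicit.

Theorem mainTheorem6 (R : realType) (T : completePseudoMetricType R)
  (HT : polish_space T) (Rel : set (T * T)) (HRel : borel_set Rel)
  (mu nu : probability (borel_of (@open T)) R) :
  exists phi0 : borel_of (@open T) -> R,
    [/\ bounded_borel phi0,
        (forall x y, phi0 x - phi0 y <= cost Rel x y) &
        forall phi : borel_of (@open T) -> R,
          bounded_borel phi ->
          (forall x y, phi x - phi y <= cost Rel x y) ->
          (dual_obj mu nu phi <= dual_obj mu nu phi0)%E].
Proof.
have hc : forall x y : borel_of (@open T), (cost Rel x y : R) <= 1.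
  by move=> x y; rewrite /cost /indic; case: ((x, y) \in Rel); rewrite /= ?subrr ?subr0 ?ler01 ?lexx.
have hc0 : forall x y : borel_of (@open T), 0 <= (cost Rel x y : R).
  by move=> x y; rewrite /cost /indic; case: ((x, y) \in Rel); rewrite /= ?subrr ?subr0 ?ler01 ?lexx.
have [H [[[bH cH] _] HM]] := exists_opt mu nu hc0.
exists H; split => // phi bphi cphi.
pose p : borel_of (@open T) := point.
pose psi x := phi x - phi p.
have bc : forall a : R, bounded_borel (fun _ : borel_of (@open T) => a).
  by move=> a; split; [exact: measurable_cst| exists `|a|].
have bpsi : bounded_borel psi.
  split; first by apply: measurable_funB => //; exact: bphi.1.
  case: bphi => _ [M hM]; exists (M + `|phi p|) => x.
  by rewrite /psi (le_trans (ler_normB _ _)) // lerD2r.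
have npsi : nf (S:=borel_of (@open T)) (R:=R) (cost Rel) psi.
  split; first split => //.
    by move=> x y; rewrite /psi; have := cphi x y; lra.
  move=> x; rewrite /psi ler_norml; have := cphi x p; have := cphi p x.
  have := hc x p; have := hc p x; move=> *; apply/andP; split; lra.
have := HM _ npsi.
rewrite /dual_obj !bb_fin // /Fr /psi !II_sub // !II_cst => h.
rewrite -EFinB lee_fin; lra.
Qed.
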